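(* Let $\mathbb{S}=(S,\Sigma,\{\tau_a\mid a\in L\})$ be an LMP, let $\Sigma_0\subseteq\Sigma$ be a sub-$\sigma$-algebra with $\mathcal{R}(\Sigma_0)=\mathcal{R}^T(\Sigma_0)$, and put $R_0=\mathcal{R}(\Sigma_0)$. If $\lambda$ is a limit ordinal and $\Sigma(\mathcal{R}(\Sigma_\lambda))=\Sigma_\lambda$, then $\mathcal{R}(\Sigma_\lambda)$ is a state bisimulation.
   Context: An LMP is a triple $(S,\Sigma,\{\tau_a\mid a\in L\})$ with $(S,\Sigma)$ a measurable space, $L$ countable, and each $\tau_a:S\times\Sigma\to[0,1]$ a Markov kernel (subprobability measure in the second argument, measurable in the first). For $R\subseteq S\times S$, $A$ is $R$-closed if $x\in A$, $xRs$ imply $s\in A$; $\Sigma(R)$ is the family of $R$-closed members of $\Sigma$. For $\Gamma\subseteq\mathcal{P}(S)$, $\mathcal{R}(\Gamma)=\{(s,t):\forall A\in\Gamma\,(s\in A\iff t\in A)\}$; for $\Lambda\subseteq\Sigma$, $\mathcal{R}^T(\Lambda)=\{(s,t):\forall a\in L\,\forall E\in\Lambda\ \tau_a(s,E)=\tau_a(t,E)\}$. $\mathcal{O}(R)=\mathcal{R}^T(\Sigma(R))$, $\mathcal{G}(\Lambda)=\Sigma(\mathcal{R}^T(\Lambda))$. Iterates: $R_{\alpha+1}=\mathcal{O}(R_\alpha)$, $R_\lambda=\bigcap_{\alpha<\lambda}R_\alpha$ for limit $\lambda$; $\Sigma_{\alpha+1}=\mathcal{G}(\Sigma_\alpha)$,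 $\Sigma_\lambda=\sigma(\bigcup_{\alpha<\lambda}\Sigma_\alpha)$ for limit $\lambda$. A state bisimulation is a symmetric relation $R$ on $S$ such that whenever $sRt$ and $C\in\Sigma(R)$, $\tau_a(s,C)=\tau_a(t,C)$ for all $a\in L$. *)

(* Defs.v *)
From HB Require Import structures.
From mathcomp Require Import all_boot all_order all_algebra.
From mathcomp Require Import all_classical all_reals all_analysis.
Set Implicit Arguments. Unset Strict Implicit. Unset Printing Implicit Defensive.
Import Order.TTheory GRing.Theory Num.Theory.
Local Open Scope classical_set_scope.
Local Open Scope ring_scope.

Section LMP.
Context (d : measure_display) (S : measurableType d) (R : realType) (L : countType).
(* An LMP: labels L (countable), one subprobability Markov kernel per label. *)
Variable tau : L -> R.-spker S ~> S.

Definition rclosed (Rel : S -> S -> Prop) (A : set S) :=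
  forall x s, A x -> Rel x s -> A s.

Definition SigmaR (Rel : S -> S -> Prop) : set (set S) :=
  [set A | measurable A /\ rclosed Rel A].

Definition RelOf (Gam : set (set S)) : S -> S -> Prop :=
  fun s t => forall A, Gam A -> (A s <-> A t).

Definition RelT (Lam : set (set S)) : S -> S -> Prop :=
  fun s t => forall (a : L) E, Lam E -> tau a s E = tau a t E.

Definition Oop (Rel : S -> S -> Prop) := RelT (SigmaR Rel).
Definition Gop (Lam : set (set S)) := SigmaR (RelT Lam).

Definition state_bisimulation (Rel : S -> S -> Prop) :=
  (forall s t, Rel s t -> Rel t s) /\
  (forall s t, Rel s t -> forall C, SigmaR Rel C -> forall a : L, tau a s C = tau a t C).
End LMP.

(* Ordinals are represented by a well-ordered index type (I, lt): every
   ordinal lambda is the top of the well-order of ordinals <= lambda. *)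
Section WellOrder.
Context (I : Type) (lt : I -> I -> Prop).
Definition is_wellorder :=
  (forall i, ~ lt i i) /\
  (forall i j k, lt i j -> lt j k -> lt i k) /\
  (forall i j, lt i j \/ i = j \/ lt j i) /\
  well_founded lt.
Definition is_zero (i : I) := forall j, ~ lt j i.
Definition is_succ_of (j i : I) := lt j i /\ forall k, lt j k -> k = i \/ lt i k.
Definition is_limit (i : I) := ~ is_zero i /\ ~ (exists j, is_succ_of j i).
End WellOrder.

Definition sigma_iterates d (S : measurableType d) (R : realType) (L : countType)
    (tau : L -> R.-spker S ~> S) (Sigma0 : set (set S))
    (I : Type) (lt : I -> I -> Prop) (F : I -> set (set S)) :=
  (forall i, is_zero lt i -> F i = Sigma0) /\
  (forall j i, is_succ_of lt j i -> F i = Gop tau (F j)) /\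
  (forall i, is_limit lt i ->
     F i = <<s \bigcup_(j in [set j | lt j i]) F j >>).

(* Main.v *)
Require Import Defs.
From HB Require Import structures.
From mathcomp Require Import all_boot all_order all_algebra.
From mathcomp Require Import all_classical all_reals all_analysis.
From Stdlib Require Import Classical.
Local Open Scope classical_set_scope.

Lemma wf_min (I : Type) (lt : I -> I -> Prop) (wf : well_founded lt)
  (P : I -> Prop) : (exists x, P x) -> exists x, P x /\ forall y, P y -> ~ lt y x.
Proof.
move=> [x Px]; apply: NNPP => hn; move: Px; elim/(well_founded_ind wf): x => x IH Px.
apply: hn; exists x; split => // y Py lyx; exact: (IH y lyx Py).
Qed.

Lemma level_set_G d (S : measurableType d) (R : realType) (L : countType)
  (tau : L -> R.-spker S ~> S) (Lam : set (set S)) (a : L) (E : set S) c :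
  measurable E -> Lam E ->
  SigmaR (RelT tau Lam) [set x | tau a x E = c].
Proof.
move=> mE LE; split.
  have := measurable_kernel (tau a) E mE measurableT [set c] (measurable_realfun.emeasurable_set1 c).
  by rewrite setTI.
by move=> x y /= <- hxy; rewrite (hxy a E LE).
Qed.

Theorem corollary3p10 (d : measure_display) (S : measurableType d)
  (R : realType) (L : countType) (tau : L -> R.-spker S ~> S)
  (Sigma0 : set (set S))
  (hsig0 : sigma_algebra setT Sigma0)
  (hsub0 : Sigma0 `<=` measurable)
  (hR0 : forall s t, RelOf Sigma0 s t <-> RelT tau Sigma0 s t)
  (I : Type) (lt : I -> I -> Prop) (hwo : is_wellorder lt)
  (F : I -> set (set S)) (hF : sigma_iterates tau Sigma0 lt F)
  (lam : I) (hlam : is_limit lt lam)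
  (hfix : SigmaR (RelOf (F lam)) = F lam) :
  state_bisimulation tau (RelOf (F lam)).
Proof.
have [irr [trans [tri wf]]] := hwo.
have [hz [hs hl]] := hF.
have classif : forall i, is_zero lt i \/ (exists j, is_succ_of lt j i) \/ is_limit lt i.
  move=> i; case: (classic (is_zero lt i)) => [|nz]; first by left.
  case: (classic (exists j, is_succ_of lt j i)) => [|ns]; first by right; left.
  by right; right; split.
have Q : forall k, [/\ F k `<=` measurable, F k setT, setI_closed (F k),
    (forall s t, RelT tau (F k) s t -> RelOf (F k) s t) &
    (forall j, lt j k -> F j `<=` F k)].
  elim/(well_founded_ind wf) => k IH.
  case: (classif k) => [kz|[[m hm]|kl]].
  - rewrite (hz k kz); split => //.
    + by case: hsig0 => h0 hC _; have := hC _ h0; rewrite setD0.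
    + by have /(sigma_algebraP (U:=setT)) [] := hsig0.
    + by move=> s t /hR0.
    + by move=> j /kz.
  - have [mm mT mI mR mmono] := IH m hm.1.
    have FmG : F m `<=` F k.
      rewrite (hs m k hm) => A FA; split; first exact: mm.
      by move=> x y Ax hxy; have := mR x y hxy A FA; case=> h _; exact: h.
    rewrite (hs m k hm) in FmG *; split.
    + by move=> A [].
    + by split => //.
    + move=> A B [mA cA] [mB cB]; split; first exact: measurableI.
      by move=> x y [Ax Bx] hxy; split; [exact: (cA x)|exact: (cB x)].
    + move=> s t hst A [mA cA].
      have hst' : RelT tau (F m) s t by move=> a E FE; apply: hst; exact: FmG.
      split => [As|At]; first exact: (cA s).
      by apply: (cA t) => // a E FE; rewrite (hst' a E FE).
    + move=> j ljk; case: (tri j m) => [ljm|[->//|lmj]].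
        exact: subset_trans (mmono j ljm) FmG.
      case: (hm.2 j lmj) => [ejk|lkj].
        by subst j; case: (irr k).
      by case: (irr k); exact: trans lkj ljk.
  - set U := \bigcup_(j in [set j | lt j k]) F j.
    have hk := hl k kl; rewrite hk.
    have sU : sigma_algebra setT <<s U >> := smallest_sigma_algebra setT U.
    have [sT _ _ sI] := (sigma_algebraP (C:=<<s U>>) (fun _ _ => @subsetT _ _)).1 sU.
    split => //.
    + apply: smallest_sub; first exact: sigma_algebra_measurable.
      by move=> A [j /= ljk FjA]; have [h _ _ _ _] := IH j ljk; exact: h.
    + move=> s t hst.
      suff sub : forall A, <<s U >> A -> A s <-> A t by rewrite /RelOf; exact: sub.
      apply: (@smallest_sub _ _ _ [set A | A s <-> A t]).
        split => //=.
        * move=> A [h1 h2]; split=> -[_ nA]; split=> // hh; apply: nA; [exact: h2|exact: h1].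
        * move=> G hG; split=> -[n _ Gn]; exists n => //; by apply hG.
      move=> A [j /= ljk FjA]; have [_ _ _ hR _] := IH j ljk.
      apply: (hR s t) => // a E FE; apply: hst; apply: sub_sigma_algebra.
      by exists j.
    + by move=> j ljk A FjA; apply: sub_sigma_algebra; exists j.
have succ_below : forall j, lt j lam -> exists b, is_succ_of lt j b /\ lt b lam.
  move=> j ljl.
  have [b [[ljb lbl] minb]] : exists b, (lt j b /\ lt b lam) /\
      forall y, (lt j y /\ lt y lam) -> ~ lt y b.
    apply: wf_min; apply: NNPP => hn; apply: hlam.2; exists j; split => // k ljk.
    case: (tri k lam) => [lkl|[->|]]; [|by left|by right].
    by case: hn; exists k.
  exists b; split => //; split => // k ljk.
  case: (tri k b) => [lkb|[->|]]; [|by left|by right].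
  by case: (minb k) => //; split => //; exact: trans lkb lbl.
have [lmeas lT lI lR lmono] := Q lam.
split.
  by move=> s t hst A FA; split => h; apply/(hst A FA).
move=> s t hst C; rewrite hfix => FC a.
have step1 : forall j E, lt j lam -> F j E -> tau a s E = tau a t E.
  move=> j E ljl FE.
  have [b [hb lbl]] := succ_below j ljl.
  have [jm _ _ _ _] := Q j.
  have X : F b [set x | tau a x E = tau a s E].
    by rewrite (hs j b hb); apply: level_set_G => //; exact: jm.
  by have [h _] := hst _ (lmono b lbl _ X); rewrite (h erefl).
set U := \bigcup_(j in [set j | lt j lam]) F j.
have FU : F lam = <<s U >> by exact: hl.
rewrite FU in FC.
have := @g_sigma_algebra_measure_unique_trace _ R S U setT measurableT.
set H := [set X | U X /\ X `<=` setT].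
move=> /(_ _ _ (tau a s) (tau a t)).
have HU : forall X, H X -> exists2 j, lt j lam & F j X.
  by move=> X [[j /= ljl FX] _]; exists j.
apply.
- by move=> X /HU [j _ FX]; have [h _ _ _ _] := Q j; exact: h.
- move=> X Y /HU [j ljl FX] /HU [k lkl FY]; split => //.
  have [hj hk] : F j `<=` F (if `[< lt j k >] then k else j) /\
    F k `<=` F (if `[< lt j k >] then k else j).
    case: (tri j k) => [ljk|[ejk|lkj]].
    - by rewrite asboolT //; split => //; have [_ _ _ _ h] := Q k; exact: h.
    - by subst k; case: (`[< lt j j >]); split.
    - have nl : ~ lt j k by move=> ljk; apply: (irr j); exact: trans ljk lkj.
      by rewrite asboolF //; split => //; have [_ _ _ _ h] := Q j; exact: h.
  have [_ _ hI _ _] := Q (if `[< lt j k >] then k else j).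
  exists (if `[< lt j k >] then k else j); last by apply: hI; [exact: hj|exact: hk].
  by case: asboolP.
- have [j ljl] : exists j, lt j lam.
    apply: NNPP => hn; apply: hlam.1 => j ljl; apply: hn; by exists j.
  by have [_ h _ _ _] := Q j; exact: step1 ljl h.
- by move=> X /HU [j ljl FX]; exact: step1 ljl FX.
- by apply: (Order.POrderTheory.le_lt_trans (sprob_kernel_le1 (tau a) s)); exact: ltey.
- by [].
- apply: (@smallest_sub _ _ _ <<s setT, H >>) FC; first exact: smallest_sigma_algebra.
  by move=> X UX; apply: sub_sigma_algebra.
Qed.
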